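(* Every absolutely summable subset of an abelian Hausdorff topological group is absolutely Cauchy summable. Conversely, in a complete abelian Hausdorff topological group every absolutely Cauchy summable subset is absolutely summable.
   Context: A subset $A$ of a topological group $G$ is absolutely summable if for every family $\{z_a:a\in A\}$ of integers there is $g\in G$ such that for every neighbourhood $U$ of $0$ there is a finite $F\subseteq A$ with $g-\sum_{a\in E}z_aa\in U$ for every finite $E\subseteq A$ containing $F$. $A$ is absolutely Cauchy summable if for every neighbourhood $U$ of $0$ there is a finite $F\subseteq A$ such that the subgroup generated by $A\setminus F$ is contained in $U$. *)

(* Defs.v *)
From HB Require Import structures.
From mathcomp Require Import all_boot all_order all_algebra.
From mathcomp Require Import all_classical all_reals all_analysis.
Set Implicit Arguments. Unset Strict Implicit. Unset Printing Implicit Defensive.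
Import Order.TTheory GRing.Theory Num.Theory.
Local Open Scope classical_set_scope.
Local Open Scope ring_scope.

(* Abelian topological groups are [topologicalZmodType]s (additive notation).
   "Neighbourhood of 0" is [nbhs 0]. *)

Definition is_subgroup (G : zmodType) (H : set G) : Prop :=
  H 0 /\ (forall x y, H x -> H y -> H (x - y)).

Definition subgroup_gen (G : zmodType) (S : set G) : set G :=
  [set x | forall H : set G, is_subgroup H -> S `<=` H -> H x].

Definition abs_summable (G : topologicalZmodType) (A : set G) : Prop :=
  forall z : G -> int, exists g : G,
    forall U : set G, nbhs (0 : G) U ->
      exists2 F : set G, finite_set F /\ F `<=` A &
        forall E : set G, finite_set E -> F `<=` E -> E `<=` A ->
          U (g - \sum_(a \in E) (a *~ z a)).

Definition abs_cauchy_summable (G : topologicalZmodType) (A : set G) : Prop :=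
  forall U : set G, nbhs (0 : G) U ->
    exists2 F : set G, finite_set F /\ F `<=` A &
      subgroup_gen (A `\` F) `<=` U.

(* Completeness of an abelian topological group (w.r.t. its group uniformity):
   every proper filter that is Cauchy in the group sense converges. *)
Definition group_cauchy (G : topologicalZmodType) (F : set_system G) : Prop :=
  forall U : set G, nbhs (0 : G) U ->
    exists2 B : set G, F B & forall x y, B x -> B y -> U (x - y).

Definition group_complete (G : topologicalZmodType) : Prop :=
  forall F : set_system G, ProperFilter F -> group_cauchy F ->
    exists g : G, F --> g.

(* Main.v *)
Require Import Defs.
From HB Require Import structures.
From mathcomp Require Import all_boot all_order all_algebra.
From mathcomp Require Import all_classical all_reals all_analysis.
Import Order.TTheory GRing.Theory Num.Theory.
Set Implicit Arguments. Unset Strict Implicit. Unset Printing Implicit Defensive.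
Local Open Scope classical_set_scope.
Local Open Scope ring_scope.

Lemma nbhs_sub (G : topologicalZmodType) (x y : G) (U : set G) :
  nbhs (x - y) U -> exists2 A, nbhs x A & exists2 B, nbhs y B &
    forall a b, A a -> B b -> U (a - b).
Proof.
move=> hU.
have := @sub_continuous G (x, y) U hU.
move=> [[A B] /= [hA hB] hAB].
exists A => //; exists B => // a b Aa Bb.
exact: (hAB (a, b)).
Qed.

Section SG.
Variables (G : zmodType) (H : set G) (hH : is_subgroup H).
Lemma sg0 : H 0. Proof. by case: hH. Qed.
Lemma sgN x : H x -> H (- x).
Proof. by move=> hx; rewrite -sub0r; apply: hH.2 => //; exact: sg0. Qed.
Lemma sgB x y : H x -> H y -> H (x - y). Proof. exact: hH.2. Qed.
Lemma sgD x y : H x -> H y -> H (x + y).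
Proof. by move=> hx hy; rewrite -[y]opprK; apply: sgB => //; apply: sgN. Qed.
Lemma sgMn x n : H x -> H (x *+ n).
Proof. move=> hx; elim: n => [|n IH]; first by rewrite mulr0n; apply: sg0. by rewrite mulrS; apply: sgD. Qed.
Lemma sgMz x n : H x -> H (x *~ n).
Proof. by move=> hx; case: n => m /=; [apply: sgMn | apply/sgN/sgMn]. Qed.
End SG.

Lemma sg_fsum (G : topologicalZmodType) (H : set G) (E : set G) (f : G -> G) :
  is_subgroup H -> finite_set E -> (forall a, E a -> H (f a)) ->
  H (\sum_(a \in E) f a).
Proof.
move=> hH fE hf; rewrite fsbig_finite //= big_seq.
apply: (big_ind H); [exact: sg0|exact: sgD|].
by move=> i; rewrite in_fset_set // inE => /hf.
Qed.

Lemma gen_subgroup (G : zmodType) (S : set G) : is_subgroup (subgroup_gen S).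
Proof.
split; first by move=> H [].
by move=> x y hx hy H hH hS; apply: sgB => //; [apply: hx|apply: hy].
Qed.

Lemma gen_incl (G : zmodType) (S : set G) : S `<=` subgroup_gen S.
Proof. by move=> x Sx H _ hS; apply: hS. Qed.

Definition psum (G : topologicalZmodType) (z : G -> int) (E : set G) : G :=
  \sum_(a \in E) (a *~ z a).
Arguments psum {G}.

Lemma psum_split (G : topologicalZmodType) z (F E : set G) :
  finite_set E -> F `<=` E -> psum z E = psum z F + psum z (E `\` F).
Proof.
move=> fE FE; rewrite /psum -fsbigU0 ?setDUK //.
- exact: sub_finite_set fE.
- exact: finite_setD.
- by move=> x [Fx []].
Qed.

Lemma part2 (G : topologicalZmodType) : group_complete G ->
     forall A : set G, abs_cauchy_summable A -> abs_summable A.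
Proof.
move=> hc A hA z.
pose Fl : set_system G := fun B => exists2 F0 : set G, finite_set F0 /\ F0 `<=` A &
  forall E, finite_set E -> F0 `<=` E -> E `<=` A -> B (psum z E).
have filF : Filter Fl.
  split.
  - by exists set0; [split; [exact: finite_set0|by []]|].
  - move=> B1 B2 [F1 [fF1 F1A] h1] [F2 [fF2 F2A] h2].
    exists (F1 `|` F2); first by split; [rewrite finite_setU|by move=> x [] ?; [apply: F1A|apply: F2A]].
    move=> E fE FE EA; split.
    + by apply: h1 => // x Fx; apply: FE; left.
    + by apply: h2 => // x Fx; apply: FE; right.
  - by move=> P Q PQ [F0 h0 hP]; exists F0 => // E *; apply: PQ; apply: hP.
have pF : ProperFilter Fl.
  split => //.
  by move=> [F0 [fF0 F0A] h]; apply: (h F0).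
have cF : group_cauchy Fl.
  move=> U hU; have [F [fF FA] hsub] := hA U hU.
  exists [set x | exists E, [/\ finite_set E, F `<=` E, E `<=` A & x = psum z E]].
    by exists F => // E fE FE EA; exists E.
  move=> _ _ [E [fE FE EA ->]] [E' [fE' FE' EA' ->]].
  rewrite (@psum_split _ z _ _ fE FE) (@psum_split _ z _ _ fE' FE').
  rewrite opprD addrACA subrr add0r.
  have hS := @gen_subgroup G (A `\` F).
  apply: hsub; apply: (@sgB _ _ hS).
  + apply: sg_fsum => //; first exact: finite_setD.
    move=> a [Ea nFa]; apply: (@sgMz _ _ hS).
    by apply: gen_incl; split => //; apply: EA.
  + apply: sg_fsum => //; first exact: finite_setD.
    move=> a [Ea nFa]; apply: (@sgMz _ _ hS).
    by apply: gen_incl; split => //; apply: EA'.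
have [g hg] := hc Fl pF cF.
exists g => U hU.
have hU' : nbhs (g - g) U by rewrite subrr.
have [P hP [Q hQ hPQ]] := @nbhs_sub _ _ _ _ hU'.
have PQ : nbhs g Q by [].
have [F0 h0 hF0] := hg _ hQ.
exists F0 => // E fE FE EA.
apply: hPQ; first exact: nbhs_singleton.
exact: hF0.
Qed.
Definition combo (G : topologicalZmodType) (S : set G) : set G :=
  [set x | exists E c, [/\ finite_set E, E `<=` S & x = psum c E]].

Lemma combo_subgroup (G : topologicalZmodType) (S : set G) : is_subgroup (combo S).
Proof.
split.
  exists set0, (fun _ => 0); split; [exact: finite_set0|by []|by rewrite /psum fsbig_set0].
move=> _ _ [E [c [fE ES ->]]] [E' [c' [fE' ES' ->]]].
pose d a := (if a \in E then c a else 0) - (if a \in E' then c' a else 0).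
have fD : finite_set (E `|` E') by rewrite finite_setU.
exists (E `|` E'), d; split => //; first by move=> x [/ES|/ES'].
have ext (E0 : set G) c0 : finite_set E0 -> E0 `<=` E `|` E' -> psum c0 E0 =
   \sum_(a \in E `|` E') (a *~ (if a \in E0 then c0 a else 0)).
  move=> fE0 sE0; rewrite /psum (eq_fsbigr (fun a => a *~ (if a \in E0 then c0 a else 0))).
    apply: fsbig_widen => // a [Da nE0]; rewrite /preimage /= memNset // ?mulr0z.
  by move=> a aE0; rewrite aE0.
rewrite (ext E c fE (fun x Ex => or_introl Ex)) (ext E' c' fE' (fun x Ex => or_intror Ex)).
rewrite /psum !fsbig_finite //= -sumrN -big_split /=.
by apply: eq_bigr => a _; rewrite /d mulrzBr.
Qed.

Lemma gen_combo (G : topologicalZmodType) (S : set G) x :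
  subgroup_gen S x -> combo S x.
Proof.
move=> h; apply: h; first exact: combo_subgroup.
move=> a Sa; exists [set a], (fun _ => 1); split; [exact: finite_set1|by move=> y ->|by rewrite /psum fsbig_set1 mulr1z].
Qed.

Lemma part1 (G : topologicalZmodType) (A : set G) :
  abs_summable A -> abs_cauchy_summable A.
Proof.
move=> hA U hU; apply: contrapT => hno.
have bad : forall F : set G, exists p : set G * (G -> int),
    finite_set F /\ F `<=` A ->
    [/\ finite_set p.1, p.1 `<=` A `\` F & ~ U (psum p.2 p.1)].
  move=> F; case: (pselect (finite_set F /\ F `<=` A)) => [[fF FA]|hF]; last first.
    by exists (set0, fun _ => 0).
  have : ~ (subgroup_gen (A `\` F) `<=` U) by move=> hs; apply: hno; exists F.
  move=> /existsNP [x /not_implyP [gx nUx]].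
  have [E [c [fE ES ex]]] := gen_combo gx.
  by exists (E, c) => _ /=; split => //; rewrite -ex.
have [ch hch] := choice bad.
pose fix Fs n := if n is m.+1 then Fs m `|` (ch (Fs m)).1 else set0.
pose B n := (ch (Fs n)).1.
pose C n := (ch (Fs n)).2.
have hFs : forall n, finite_set (Fs n) /\ Fs n `<=` A.
  elim=> [|n [fn nA]] /=; first by split; [exact: finite_set0|by []].
  have [fB BA _] := hch _ (conj fn nA).
  split; first by rewrite finite_setU.
  by move=> x [/nA|/BA []].
have hB n : [/\ finite_set (B n), B n `<=` A `\` Fs n & ~ U (psum (C n) (B n))].
  exact: hch (hFs n).
have mono m n : (m <= n)%N -> Fs m `<=` Fs n.
  elim: n => [|n IH]; first by rewrite leqn0 => /eqP ->.
  rewrite leq_eqVlt => /orP [/eqP ->//|]; rewrite ltnS => /IH h x /h Fx /=.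
  by left.
have BF m : B m `<=` Fs m.+1 by move=> x Bx /=; right.
have disj m n a : B m a -> B n a -> m = n.
  move=> Bm Bn; case: (ltngtP m n) => // hmn.
  - have [_ h _] := hB n; have [_ nF] := h a Bn; exfalso; apply: nF.
    by apply: (mono m.+1 n hmn); apply: BF.
  - have [_ h _] := hB m; have [_ nF] := h a Bm; exfalso; apply: nF.
    by apply: (mono n.+1 m hmn); apply: BF.
pose z a := if pselect (exists n, B n a) is left h then C (projT1 (cid h)) a else 0.
have hz n a : B n a -> z a = C n a.
  move=> Bna; rewrite /z; case: pselect => [h|[]]; last by exists n.
  by case: cid => m /= hm; rewrite (disj _ _ _ hm Bna).
have [g hg] := hA z.
have hU' : nbhs (0 - 0 : G) U by rewrite subr0.
have [P hP [Q hQ hPQ]] := nbhs_sub hU'.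
have [F0 [fF0 F0A] hF0] := hg (P `&` Q) (filterI hP hQ).
have [n hn] : exists n, forall a, F0 a -> ~ B n a.
  apply: contrapT => hn.
  have hn' : forall n, exists a, F0 a /\ B n a.
    move=> n; apply: contrapT => hna; apply: hn; exists n => a Fa Ba.
    by apply: hna; exists a.
  have [f hf] := choice hn'.
  have : finite_set (f @^-1` F0).
    apply: finite_preimage => // m k _ _ e.
    by apply: (disj m k (f m)); [case: (hf m)|rewrite e; case: (hf k)].
  have -> : f @^-1` F0 = setT by apply/seteqP; split => // m _; case: (hf m).
  exact: infinite_nat.
have [fBn BnA nU] := hB n.
have fE : finite_set (F0 `|` B n) by rewrite finite_setU.
have F0E : F0 `<=` F0 `|` B n by move=> x Fx; left.
have EA : F0 `|` B n `<=` A by move=> x [/F0A|/BnA []].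
have [_ hE] := hF0 _ fE F0E EA.
have [hF _] := hF0 _ fF0 (fun x h => h) F0A.
have := hPQ _ _ hF hE.
rewrite opprB addrC addrA subrK.
have := psum_split z fE F0E; rewrite /psum => ->.
rewrite addrC addKr.
have -> : (F0 `|` B n) `\` F0 = B n.
  apply/seteqP; split => x; first by case => -[].
  by move=> Bx; split; [right|move/hn; apply].
rewrite (eq_fsbigr (fun a => a *~ C n a)); first exact: nU.
by move=> a; rewrite inE => Ba; rewrite (hz n a Ba).
Qed.

Theorem proposition6p5 :
  (forall (G : topologicalZmodType), hausdorff_space G ->
     forall A : set G, abs_summable A -> abs_cauchy_summable A) /\
  (forall (G : topologicalZmodType), hausdorff_space G -> group_complete G ->
     forall A : set G, abs_cauchy_summable A -> abs_summable A).
Proof.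
split.
- by move=> G _ A; apply: part1.
- by move=> G _ hc A; apply: part2.
Qed.
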